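(* For every $J\subseteq[n]$, the hyperplane arrangement $\mathcal B_J$ is free.
   Context: A hyperplane arrangement in $\mathbb C^n$ is a finite set of linear hyperplanes; $H_\alpha$ is the zero set of a nonzero linear form $\alpha$. $\operatorname{Der}(\mathbb C[\mathbf x_n])=\bigoplus_{i=1}^n\mathbb C[\mathbf x_n]\partial_i$ is the module of derivations of $\mathbb C[x_1,\dots,x_n]$, and for an arrangement $\mathcal A$, $\operatorname{Der}(\mathcal A)=\{\delta\in\operatorname{Der}(\mathbb C[\mathbf x_n]):\alpha\mid\delta(\alpha)\text{ for all }H_\alpha\in\mathcal A\}$. $\mathcal A$ is free if $\operatorname{Der}(\mathcal A)$ is a free $\mathbb C[\mathbf x_n]$-module. For $J\subseteq[n]$, $\mathcal B_J$ is the arrangement consisting of $H_{x_j}$ for $j\in[n]\setminus J$ together with $H_{x_j-x_i}$ and $H_{x_j+x_i}$ for all $j\in[n]\setminus J$ and $j<i\le n$. *)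

(* Defs.v *)
From HB Require Import structures.
From mathcomp Require Import all_boot all_order all_algebra.
From mathcomp Require Import complex.
From mathcomp Require Import Rstruct.
From mathcomp Require Import mpoly.
From Stdlib Require Import Rdefinitions.

Set Implicit Arguments.
Unset Strict Implicit.
Unset Printing Implicit Defensive.

Import GRing.Theory.
Local Open Scope ring_scope.

Definition CC : Type := (complex Rdefinitions.R).

Notation Cpoly n := {mpoly CC[n]}.

(* A linear form alpha = sum_i a_i x_i on C^n is given by its coefficient
   vector a : 'I_n -> C; the hyperplane H_alpha is its zero set.  A (central)
   hyperplane arrangement is given by a list of defining linear forms. *)
Definition linform (n : nat) := {ffun 'I_n -> CC}.

Definition lin_poly (n : nat) (a : linform n) : Cpoly n :=
  \sum_(i < n) a i *: 'X_i.

(* A derivation delta = sum_i f_i d_i of C[x_1..x_n] is given by (f_i)_i. *)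
Definition derivation (n : nat) := 'I_n -> Cpoly n.

(* delta(alpha) for alpha linear: sum_i a_i f_i  ( = sum_i f_i d_i(alpha) ). *)
Definition der_app (n : nat) (d : derivation n) (a : linform n) : Cpoly n :=
  \sum_(i < n) a i *: d i.

Definition pdvd (n : nat) (p q : Cpoly n) : Prop := exists g : Cpoly n, q = g * p.

Definition in_Der (n : nat) (A : seq (linform n)) (d : derivation n) : Prop :=
  forall a, a \in A -> pdvd (lin_poly a) (der_app d a).

Definition free_arr (n : nat) (A : seq (linform n)) : Prop :=
  exists (m : nat) (b : 'I_m -> derivation n),
    (forall k, in_Der A (b k)) /\
    (forall d, in_Der A d ->
       exists c : 'I_m -> Cpoly n, forall i, d i = \sum_(k < m) c k * b k i) /\
    (forall c : 'I_m -> Cpoly n,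
       (forall i, \sum_(k < m) c k * b k i = 0) -> forall k, c k = 0).

Definition xform (n : nat) (j : 'I_n) : linform n := [ffun k => (k == j)%:R].
Definition minus_form (n : nat) (j i : 'I_n) : linform n :=
  [ffun k => (k == j)%:R - (k == i)%:R].
Definition plus_form (n : nat) (j i : 'I_n) : linform n :=
  [ffun k => (k == j)%:R + (k == i)%:R].

(* B_J : H_{x_j} (j notin J), H_{x_j - x_i}, H_{x_j + x_i} (j notin J, j < i). *)
Definition B_arr (n : nat) (J : {set 'I_n}) : seq (linform n) :=
  [seq xform j | j <- enum 'I_n & j \notin J] ++
  flatten [seq flatten [seq [:: minus_form j i; plus_form j i]
                         | i <- enum 'I_n & ltn (nat_of_ord j) (nat_of_ord i)]
          | j <- enum 'I_n & j \notin J].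

(* Main.v *)
Require Import Defs.
From mathcomp Require Import all_boot all_order all_algebra.
From mathcomp Require Import complex Rstruct mpoly ring zify.
From Stdlib Require Import Rdefinitions.
Set Implicit Arguments. Unset Strict Implicit. Unset Printing Implicit Defensive.
Import GRing.Theory Num.Theory.
Local Open Scope ring_scope.

Definition dv (R : comRingType) (D x : R) := exists g, x = g * D.

Lemma dv0 (R : comRingType) (D : R) : dv D 0.
Proof. by exists 0; rewrite mul0r. Qed.
Lemma dv_refl (R : comRingType) (D : R) : dv D D.
Proof. by exists 1; rewrite mul1r. Qed.
Lemma dvD (R : comRingType) (D x y : R) : dv D x -> dv D y -> dv D (x + y).
Proof. by move=> [a ->] [b ->]; exists (a + b); rewrite mulrDl. Qed.
Lemma dvN (R : comRingType) (D x : R) : dv D x -> dv D (- x).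
Proof. by move=> [a ->]; exists (- a); rewrite mulNr. Qed.
Lemma dvB (R : comRingType) (D x y : R) : dv D x -> dv D y -> dv D (x - y).
Proof. by move=> hx hy; apply: dvD hx (dvN hy). Qed.
Lemma dvMl (R : comRingType) (D x y : R) : dv D x -> dv D (y * x).
Proof. by move=> [a ->]; exists (y * a); rewrite mulrA. Qed.
Lemma dvMr (R : comRingType) (D x y : R) : dv D x -> dv D (x * y).
Proof. by move=> h; rewrite mulrC; apply: dvMl. Qed.
Lemma dv_sum (R : comRingType) (D : R) (I : Type) (r : seq I) (P : pred I) F :
  (forall i, P i -> dv D (F i)) -> dv D (\sum_(i <- r | P i) F i).
Proof. by move=> h; apply: big_ind => //; [apply: dv0 | apply: dvD]. Qed.
Lemma dv_cong_mul (R : comRingType) (D a b c d : R) :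
  dv D (a - b) -> dv D (c - d) -> dv D (a * c - b * d).
Proof.
move=> h1 h2; have -> : a * c - b * d = (a - b) * c + b * (c - d) by ring.
by apply: dvD; [apply: dvMr | apply: dvMl].
Qed.
Lemma dv_cong_exp (R : comRingType) (D a b : R) e :
  dv D (a - b) -> dv D (a ^+ e - b ^+ e).
Proof.
move=> h; elim: e => [|e IH]; first by rewrite !expr0 subrr; apply: dv0.
by rewrite !exprS; apply: dv_cong_mul.
Qed.
Lemma dv_cong_prod (R : comRingType) (D : R) (I : Type) (r : seq I) (P : pred I) F G :
  (forall i, P i -> dv D (F i - G i)) ->
  dv D (\prod_(i <- r | P i) F i - \prod_(i <- r | P i) G i).
Proof.
move=> h; apply: (big_ind2 (fun x y => dv D (x - y))) => //.
- by rewrite subrr; apply: dv0.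
- by move=> *; apply: dv_cong_mul.
Qed.

Definition stup n (k : 'I_n) (c : Cpoly n) : n.-tuple (Cpoly n) :=
  [tuple (if i == k then c else 'X_i) | i < n].

Lemma sub_X n (k : 'I_n) c i : comp_mpoly (stup k c) 'X_i = if i == k then c else 'X_i.
Proof. by rewrite comp_mpolyXU -tnth_nth tnth_mktuple. Qed.

Lemma sub_dv n (k : 'I_n) c p : dv ('X_k - c) (p - comp_mpoly (stup k c) p).
Proof.
rewrite {1}(mpolyE p) comp_mpolyEX -sumrB; apply: dv_sum => m _.
rewrite -scalerBr -mul_mpolyC; apply: dvMl.
rewrite comp_mpolyX [X in dv _ (X - _)]mpolyXE_id.
eapply dv_cong_prod => i _.
eapply dv_cong_exp; rewrite /stup tnth_mktuple.
case: eqP => [->|_]; first exact: dv_refl.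
by rewrite subrr; apply: dv0.
Qed.

Lemma sub_zero_dv n (k : 'I_n) c p : comp_mpoly (stup k c) p = 0 -> dv ('X_k - c) p.
Proof. by move=> h; have := sub_dv k c p; rewrite h subr0. Qed.

Lemma dv_sub_zero n (k : 'I_n) c p : comp_mpoly (stup k c) c = c ->
  dv ('X_k - c) p -> comp_mpoly (stup k c) p = 0.
Proof.
move=> hc [g ->]; rewrite rmorphM rmorphB /= sub_X eqxx hc subrr mulr0 //.
Qed.

Lemma Cmulf_eq0 n (x y : Cpoly n) : (x * y == 0) = (x == 0) || (y == 0).
Proof. exact: mulf_eq0. Qed.

Lemma dv_combine n (k : 'I_n) c D p : comp_mpoly (stup k c) c = c ->
  comp_mpoly (stup k c) D != 0 -> dv D p -> dv ('X_k - c) p ->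
  dv (D * ('X_k - c)) p.
Proof.
move=> hc hD [q ->] h.
have := dv_sub_zero hc h.
rewrite rmorphM /= => /eqP. 
rewrite Cmulf_eq0 => /orP [/eqP hq | hD0]; last first.
  by case/negP: hD.
move: hq => /sub_zero_dv [g ->]; exists g.
by rewrite mulrAC -mulrA.
Qed.

Lemma sum_delta n (V : lmodType CC) (j : 'I_n) (F : 'I_n -> V) :
  \sum_(i < n) (i == j)%:R *: F i = F j.
Proof.
rewrite (bigD1 j) //= eqxx scale1r big1 ?addr0 // => i /negbTE ->.
by rewrite scale0r.
Qed.

Lemma lin_xform n (j : 'I_n) : lin_poly (xform j) = 'X_j.
Proof. by rewrite /lin_poly (eq_bigr (fun i => (i == j)%:R *: 'X_i)) ?sum_delta // => i _; rewrite ffunE. Qed.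
Lemma der_xform n (d : derivation n) (j : 'I_n) : der_app d (xform j) = d j.
Proof. by rewrite /der_app (eq_bigr (fun i => (i == j)%:R *: d i)) ?sum_delta // => i _; rewrite ffunE. Qed.
Lemma lin_minus n (j i : 'I_n) : lin_poly (minus_form j i) = 'X_j - 'X_i.
Proof.
rewrite /lin_poly (eq_bigr (fun k => (k == j)%:R *: 'X_k - (k == i)%:R *: 'X_k)).
  by rewrite sumrB !sum_delta.
by move=> k _; rewrite ffunE scalerBl.
Qed.
Lemma der_minus n (d : derivation n) (j i : 'I_n) : der_app d (minus_form j i) = d j - d i.
Proof.
rewrite /der_app (eq_bigr (fun k => (k == j)%:R *: d k - (k == i)%:R *: d k)).
  by rewrite sumrB !sum_delta.
by move=> k _; rewrite ffunE scalerBl.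
Qed.
Lemma lin_plus n (j i : 'I_n) : lin_poly (plus_form j i) = 'X_j + 'X_i.
Proof.
rewrite /lin_poly (eq_bigr (fun k => (k == j)%:R *: 'X_k + (k == i)%:R *: 'X_k)).
  by rewrite big_split /= !sum_delta.
by move=> k _; rewrite ffunE scalerDl.
Qed.
Lemma der_plus n (d : derivation n) (j i : 'I_n) : der_app d (plus_form j i) = d j + d i.
Proof.
rewrite /der_app (eq_bigr (fun k => (k == j)%:R *: d k + (k == i)%:R *: d k)).
  by rewrite big_split /= !sum_delta.
by move=> k _; rewrite ffunE scalerDl.
Qed.

Lemma mem_B n (J : {set 'I_n}) a : a \in B_arr J ->
  (exists j, j \notin J /\ a = xform j) \/
  (exists (j i : 'I_n), j \notin J /\ ltn j i /\ (a = minus_form j i \/ a = plus_form j i)).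
Proof.
rewrite mem_cat => /orP [/mapP [j]|/flatten_mapP [j]].
  by rewrite mem_filter => /andP [hj _] ->; left; exists j.
rewrite mem_filter => /andP [hj _] /= H.
have /flattenP [s Hs Has] := H.
have /mapP [i Hi Es] := Hs.
move: Hi Has; rewrite Es mem_filter => /andP [hji _].
rewrite !inE => /orP [] /eqP ->;
  by right; exists j, i; auto.
Qed.

Lemma xform_B n (J : {set 'I_n}) j : j \notin J -> xform j \in B_arr J.
Proof. by move=> hj; rewrite mem_cat map_f // mem_filter hj mem_enum. Qed.

Lemma mp_B n (J : {set 'I_n}) (j i : 'I_n) : j \notin J -> ltn j i ->
  minus_form j i \in B_arr J /\ plus_form j i \in B_arr J.
Proof.
move=> hj hji.
have H1 : flatten [seq [:: minus_form j i0; plus_form j i0] | i0 : 'I_n <- enum 'I_n & ltn j i0]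
   \in [seq flatten [seq [:: minus_form j0 i0; plus_form j0 i0]
                         | i0 : 'I_n <- enum 'I_n & ltn j0 i0]
          | j0 : 'I_n <- enum 'I_n & j0 \notin J].
  by apply: (map_f (fun j0 : 'I_n => flatten [seq [:: minus_form j0 i0; plus_form j0 i0]
                         | i0 : 'I_n <- enum 'I_n & ltn j0 i0])); rewrite mem_filter hj mem_enum.
have H2 : [:: minus_form j i; plus_form j i] \in
   [seq [:: minus_form j i0; plus_form j i0] | i0 : 'I_n <- enum 'I_n & ltn j i0].
  by apply: (map_f (fun i0 : 'I_n => [:: minus_form j i0; plus_form j i0])); rewrite mem_filter hji mem_enum.
split; rewrite mem_cat; apply/orP; right; apply/flattenP; eexists; try exact: H1;
  apply/flattenP; eexists; try exact: H2; by rewrite !inE eqxx ?orbT.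
Qed.

Definition Gprod n (J : {set 'I_n}) (k : 'I_n) (t : Cpoly n) : Cpoly n :=
  \prod_(a < n | ltn a k && (a \notin J)) (t ^+ 2 - 'X_a ^+ 2).
Definition G n (J : {set 'I_n}) (k : 'I_n) (t : Cpoly n) : Cpoly n :=
  (if k \in J then 1 else t) * Gprod J k t.
Definition condb n (J : {set 'I_n}) (k i : 'I_n) : bool :=
  (i == k) || ((k \notin J) && ltn k i).
Definition bas n (J : {set 'I_n}) (k : 'I_n) : derivation n :=
  fun i => if condb J k i then G J k 'X_i else 0.

Lemma G_cong n (J : {set 'I_n}) k (D u v : Cpoly n) :
  dv D (u - v) -> dv D (G J k u - G J k v).
Proof.
move=> h; rewrite /G; apply: dv_cong_mul.
  by case: (k \in J) => //; rewrite subrr; apply: dv0.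
rewrite /Gprod; eapply dv_cong_prod => a _.
have -> : u ^+ 2 - 'X_a ^+ 2 - (v ^+ 2 - 'X_a ^+ 2) = u ^+ 2 - v ^+ 2 by ring.
exact: dv_cong_exp.
Qed.

Lemma G_odd n (J : {set 'I_n}) k (t : Cpoly n) : k \notin J ->
  G J k (- t) = - G J k t.
Proof.
move=> hk; rewrite /G (negbTE hk) mulNr; congr (- (_ * _)).
by apply: eq_bigr => a _; rewrite sqrrN.
Qed.

Lemma Gprod_fac n (J : {set 'I_n}) (k j i : 'I_n) : j \notin J -> ltn j k ->
  dv ('X_j - 'X_i) (Gprod J k 'X_i) /\ dv ('X_j + 'X_i) (Gprod J k 'X_i).
Proof.
move=> hj hjk; rewrite /Gprod (bigD1 j) /=; last by apply/andP.
split.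
  have -> : ('X_i ^+ 2 - 'X_j ^+ 2 : Cpoly n) = ('X_j - 'X_i) * (- ('X_j + 'X_i)) by ring.
  by apply: dvMr; apply: dvMr; apply: dv_refl.
have -> : ('X_i ^+ 2 - 'X_j ^+ 2 : Cpoly n) = ('X_j + 'X_i) * ('X_i - 'X_j) by ring.
by apply: dvMr; apply: dvMr; apply: dv_refl.
Qed.

Lemma dv_G_fac n (J : {set 'I_n}) (k j i : 'I_n) : j \notin J -> ltn j k ->
  dv ('X_j - 'X_i) (G J k 'X_i) /\ dv ('X_j + 'X_i) (G J k 'X_i).
Proof.
move=> hj hjk; have [h1 h2] := Gprod_fac i hj hjk.
by split; rewrite /G; apply: dvMl.
Qed.

Lemma cond_imp n (J : {set 'I_n}) (k j i : 'I_n) : j \notin J -> ltn j i ->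
  condb J k j -> (k \notin J) && condb J k i.
Proof.
move=> hj hji; rewrite /condb => /orP [/eqP E|/andP [hk hkj]].
  by rewrite -E hj hji orbT.
by rewrite hk /= (ltn_trans hkj hji) orbT.
Qed.

Lemma cond_lt n (J : {set 'I_n}) (k j i : 'I_n) : ltn j i ->
  ~~ condb J k j -> condb J k i -> ltn j k.
Proof.
move=> hji; rewrite /condb negb_or => /andP [hjk h2] /orP [/eqP <- //|/andP [hk hki]].
move: h2; rewrite hk /= -leqNgt leq_eqVlt => /orP [/eqP E|//].
have jk : j = k by apply: val_inj.
by move: hjk; rewrite jk eqxx.
Qed.

Lemma bas_in n (J : {set 'I_n}) k : in_Der (B_arr J) (bas J k).
Proof.
move=> a /mem_B [[j [hj ->]] | [j [i [hj [hji [->|->]]]]]].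
- rewrite lin_xform der_xform /bas /pdvd.
  case E: (condb J k j); last by apply: dv0.
  move: E; rewrite /condb /G => /orP [/eqP E|/andP [hk _]].
    by move: hj; rewrite E => /negbTE ->; apply: dvMr; apply: dv_refl.
  by rewrite (negbTE hk); apply: dvMr; apply: dv_refl.
- rewrite lin_minus der_minus /bas /pdvd.
  case E: (condb J k j).
    have /andP [hk ->] := cond_imp hj hji E.
    by apply: G_cong; apply: dv_refl.
  case E2: (condb J k i); last by rewrite subrr; apply: dv0.
  have hjk := cond_lt hji (negbT E) E2.
  by rewrite sub0r; apply: dvN; case: (@dv_G_fac n J k j i hj hjk).
- rewrite lin_plus der_plus /bas /pdvd.
  case E: (condb J k j).
    have /andP [hk ->] := cond_imp hj hji E.
    rewrite -[G J k 'X_i]opprK -G_odd //.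
    by apply: G_cong; rewrite opprK; apply: dv_refl.
  case E2: (condb J k i); last by rewrite addr0; apply: dv0.
  have hjk := cond_lt hji (negbT E) E2.
  by rewrite add0r; case: (@dv_G_fac n J k j i hj hjk).
Qed.

Lemma neq0_eval n (v : 'I_n -> CC) (p : Cpoly n) : meval v p != 0 -> p != 0.
Proof. by apply: contraNneq => ->; rewrite meval0. Qed.

Lemma sub_X_ne n (j a : 'I_n) c : a != j -> comp_mpoly (stup j c) 'X_a = 'X_a.
Proof. by move=> h; rewrite sub_X (negbTE h). Qed.

Lemma eval_sub n (j : 'I_n) c (v : 'I_n -> CC) p :
  meval v (comp_mpoly (stup j c) p) = meval (fun i => if i == j then meval v c else v i) p.
Proof.
rewrite comp_mpoly_meval; apply: meval_eq => i; rewrite /stup tnth_mktuple.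
by case: eqP => // _; rewrite mevalXU.
Qed.

Lemma two_neq0 : (1 + 1 : CC) != 0.
Proof. by rewrite -[1 + 1]/(2%:R) pnatr_eq0. Qed.

Lemma eval_D n (j a : 'I_n) (b : bool) (s : seq 'I_n) c (e : CC) :
  a \notin s -> a != j -> (forall b0, b0 \in s -> b0 != j) ->
  meval (fun i => (i == a)%:R) c = e -> e ^+ 2 = 1 ->
  meval (fun i => (i == a)%:R) (comp_mpoly (stup j c)
     ((if b then 'X_j else 1) * \prod_(b0 <- s) ('X_j ^+ 2 - 'X_b0 ^+ 2))) =
  (if b then e else 1).
Proof.
move=> has haj hs hc he; rewrite eval_sub hc rmorphM rmorph_prod /=.
rewrite big_seq_cond big1 ?mulr1.
  by case: b; rewrite ?mevalXU ?eqxx ?meval1.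
move=> b0 /andP [hb0 _]; rewrite rmorphB !rmorphXn /= !mevalXU eqxx.
have -> : (b0 == j) = false by apply/negbTE/hs.
have -> : (b0 == a) = false by apply/negbTE; apply: contraNneq has => <-.
by rewrite he /= expr0n subr0.
Qed.

Lemma prod_dv n (j : 'I_n) (b : bool) (p : Cpoly n) (s : seq 'I_n) :
  uniq s -> (forall a, a \in s -> a != j) ->
  dv (if b then 'X_j else 1) p ->
  (forall a, a \in s -> dv ('X_j - 'X_a) p /\ dv ('X_j + 'X_a) p) ->
  dv ((if b then 'X_j else 1) * \prod_(a <- s) ('X_j ^+ 2 - 'X_a ^+ 2)) p.
Proof.
move=> + + hb; elim: s => [|a s IH] /=.
  by move=> _ _ _; rewrite big_nil mulr1.
move=> /andP [has us] hs hp.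
have hsj : forall b0, b0 \in s -> b0 != j by move=> b0 hb0; apply: hs; rewrite inE hb0 orbT.
have haj : a != j by apply: hs; rewrite inE eqxx.
have [hpa hpa'] := hp a (mem_head a s).
have IH' := IH us hsj (fun b0 hb0 => hp b0 (@mem_behead _ (a :: s) _ hb0)).
set D := _ * \prod_(a <- s) _ in IH'.
pose v := fun i : 'I_n => (i == a)%:R : CC.
have step1 : dv (D * ('X_j - 'X_a)) p.
  apply: dv_combine => //; first exact: sub_X_ne.
  apply: (@neq0_eval _ v); rewrite /D (@eval_D _ _ _ _ _ _ 1) //.
  - by case: (b); rewrite oner_eq0.
  - by rewrite /v mevalXU eqxx.
  - by rewrite expr1n.
have ev2 : meval v (comp_mpoly (stup j (- 'X_a)) D) = (if b then -1 else 1).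
  apply: eval_D => //.
  - by rewrite rmorphN /= /v mevalXU eqxx.
  - by rewrite sqrrN expr1n.
have ev3 : meval v (comp_mpoly (stup j (- 'X_a)) ('X_j - 'X_a)) = -1 - 1.
  by rewrite eval_sub rmorphB /= !mevalXU eqxx (negbTE haj) rmorphN /= mevalXU /v eqxx.
have nz : comp_mpoly (stup j (- 'X_a)) (D * ('X_j - 'X_a)) != 0.
  apply: (@neq0_eval _ v).
  rewrite rmorphM /= (rmorphM (meval v)).
  have h : (if b then -1 else 1) * (-1 - 1) != 0 :> CC.
    by rewrite -opprD mulrN oppr_eq0; case: (b); rewrite ?mul1r ?mulN1r ?oppr_eq0 two_neq0.
  rewrite -ev2 -ev3 in h; exact: h.
have step2 : dv (D * ('X_j - 'X_a) * ('X_j - - 'X_a)) p.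
  apply: dv_combine => //.
  - by rewrite rmorphN /= sub_X_ne.
  - by rewrite opprK.
rewrite big_cons.
have E : (if b then 'X_j else 1) * (('X_j ^+ 2 - 'X_a ^+ 2) * \prod_(a <- s) ('X_j ^+ 2 - 'X_a ^+ 2))
   = D * ('X_j - 'X_a) * ('X_j - - 'X_a).
  rewrite /D.
  ring.
by rewrite E.
Qed.



Lemma G_diag_neq0 n (J : {set 'I_n}) (k : 'I_n) : G J k 'X_k != 0.
Proof.
pose w := (fun i => (i == k)%:R : CC).
have h1 : meval w (Gprod J k 'X_k) = 1.
  rewrite /Gprod rmorph_prod /=; apply: big1 => a /andP [hak _].
  rewrite rmorphB !rmorphXn /= !mevalXU /w eqxx.
  have -> : (a == k) = false.
    by apply/negbTE; rewrite -(inj_eq val_inj) /= neq_ltn hak.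
  by rewrite (_ : true%:R = 1) ?mulr1n // (_ : false%:R = 0) ?mulr0n // expr0n subr0 expr1n.
have h2 : meval w (if k \in J then 1 else 'X_k : Cpoly n) = 1.
  by case: (k \in J); rewrite ?meval1 ?mevalXU /w ?eqxx.
have E : meval w (G J k 'X_k) = 1 by rewrite /G rmorphM /= h2 h1 mulr1.
by apply: (@neq0_eval _ w); rewrite E oner_eq0.
Qed.

Lemma bas_indep n (J : {set 'I_n}) (c : 'I_n -> Cpoly n) :
  (forall i, \sum_(k < n) c k * bas J k i = 0) -> forall k, c k = 0.
Proof.
move=> h.
suff H : forall m (k : 'I_n), ltn k m -> c k = 0 by move=> k; apply: (H n); exact: ltn_ord.
elim=> [//|m IH] k /= hk.
case: (ltnP k m) => [/IH //| hkm].
have := h k; rewrite (bigD1 k) //= big1 ?addr0.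
  rewrite /bas /condb eqxx /= => /eqP; rewrite Cmulf_eq0 => /orP [/eqP //|].
  by move=> /eqP E; move: (G_diag_neq0 J k); rewrite E eqxx.
move=> l hl; case: (ltnP l k) => [hlk | hkl].
  by rewrite IH ?mul0r //= (leq_trans hlk).
rewrite /bas /condb eq_sym (negbTE hl) /=.
by rewrite ltnNge hkl andbF mulr0.
Qed.

Lemma in_Der_lin n (A : seq (linform n)) (d e : derivation n) (c0 : Cpoly n) :
  in_Der A d -> in_Der A e -> in_Der A (fun i => d i - c0 * e i).
Proof.
move=> hd he a ha; rewrite /pdvd /der_app.
rewrite (eq_bigr (fun i => a i *: d i - c0 * (a i *: e i))) => [|i _]; last first.
  by rewrite scalerBr scalerAr.
rewrite sumrB -mulr_sumr.
apply: dvB; [exact: (hd a ha) | apply: dvMl; exact: (he a ha)].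
Qed.

Lemma dv_oppD (R : comRingType) (D x : R) : dv (- D) x -> dv D x.
Proof. by move=> [g ->]; exists (- g); rewrite mulrN mulNr. Qed.

Lemma diag_dv n (J : {set 'I_n}) (d : derivation n) (j : 'I_n) :
  in_Der (B_arr J) d -> (forall i : 'I_n, ltn i j -> d i = 0) ->
  dv (G J j 'X_j) (d j).
Proof.
move=> hd hz; rewrite /G /Gprod -big_filter -if_neg.
apply: prod_dv.
- by rewrite filter_uniq // index_enum_uniq.
- move=> a; rewrite mem_filter => /andP [/andP [haj _] _].
  by rewrite -(inj_eq val_inj) /= neq_ltn; move: haj => /= ->.
- case: (boolP (j \in J)) => hj /=; first by exists (d j); rewrite mulr1.
  by have := hd _ (xform_B hj); rewrite /pdvd lin_xform der_xform.
- move=> a; rewrite mem_filter => /andP [/andP [haj haJ] _].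
  have [h1 h2] := mp_B haJ haj.
  split.
    have := hd _ h1; rewrite /pdvd lin_minus der_minus (hz a haj) sub0r => h.
    by apply: dv_oppD; rewrite opprB; move/dvN: h; rewrite opprK.
  by have := hd _ h2; rewrite /pdvd lin_plus der_plus (hz a haj) add0r addrC.
Qed.

Lemma gen n (J : {set 'I_n}) : forall (m : nat) (d : derivation n), in_Der (B_arr J) d ->
  (forall i : 'I_n, ltn i (subn n m) -> d i = 0) ->
  exists c : 'I_n -> Cpoly n, forall i, d i = \sum_(k < n) c k * bas J k i.
Proof.
elim=> [|m IH] d hd hz.
  exists (fun _ => 0) => i; rewrite big1 => [|k _]; last by rewrite mul0r.
  by apply: hz; rewrite /= subn0 ltn_ord.
case: (ltnP m n) => hmn; last first.
  apply: IH => // i /=; have -> : subn n m = 0%N by lia.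
  by [].
have hj : ltn (subn n m.+1) n by rewrite /=; lia.
pose j0 := Ordinal hj.
have [c0 Ec0] := diag_dv hd (fun i (hi : ltn i j0) => hz i hi).
pose d' := fun i => d i - c0 * bas J j0 i.
have hd' : in_Der (B_arr J) d' := @in_Der_lin n (B_arr J) d (bas J j0) c0 hd (@bas_in n J j0).
have hz' : forall i : 'I_n, ltn i (subn n m) -> d' i = 0.
  move=> i hi; rewrite /d'; case: (ltnP i j0) => h.
    rewrite hz // /bas /condb.
    have -> : (i == j0) = false by apply/negbTE; rewrite -(inj_eq val_inj) /= neq_ltn h.
    by rewrite /= ltnNge (ltnW h) andbF mulr0 subr0.
  have -> : i = j0 by apply: val_inj; move: hi h => /=; lia.
  by rewrite Ec0 /bas /condb eqxx /= subrr.
have [c' Ec'] := IH d' hd' hz'.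
exists (fun k => c' k + (if k == j0 then c0 else 0)) => i.
rewrite (eq_bigr (fun k => c' k * bas J k i + (if k == j0 then c0 else 0) * bas J k i)) => [|k _]; last first.
  by rewrite mulrDl.
rewrite big_split /= -Ec' (bigD1 j0) //= eqxx big1 => [|k /negbTE ->]; last by rewrite mul0r.
by rewrite addr0 /d' subrK.
Qed.

Theorem mainTheorem14 (n : nat) (J : {set 'I_n}) : free_arr (B_arr J).
Proof.
exists n, (bas J); split; first exact: bas_in.
split; last exact: bas_indep.
move=> d hd; apply: (gen (m := n)) => // i; rewrite subnn.
by [].
Qed.
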